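(* For $n\ge1$ define the $\mathbb{K}$-linear endomorphism $P_{\mu,n}$ of $M(\mu)\otimes V_1^{\otimes n}$ by \[ P_{\mu,n}=\frac{F_{\mu,n-1}\,F_{\mu+1,n-2}\cdots F_{\mu+n-2,1}\,F_{\mu+n-1}\;E_{\mu+n-1}\,E_{\mu+n-2,1}\cdots E_{\mu+1,n-2}\,E_{\mu,n-1}}{[\mu+n][\mu+n-1]\cdots[\mu+1]} \] (so $P_{\mu,1}=F_\mu E_\mu/[\mu+1]$). Then $P_{\mu,n}$ is a $U_q(\mathfrak{sl}_2)$-module endomorphism of $M(\mu)\otimes V_1^{\otimes n}$ satisfying $P_{\mu,n}^2=P_{\mu,n}$, and, for $n\ge2$ and every $i=1,\dots,n-1$, \[ \varepsilon_i\circ P_{\mu,n}=0,\qquad P_{\mu,n}\circ\eta_i=0, \] where $\varepsilon_i=\mathrm{Id}_{M(\mu)}\otimes\mathrm{Id}_{V_1}^{\otimes(i-1)}\otimes\varepsilon\otimes\mathrm{Id}_{V_1}^{\otimes(n-i-1)}: M(\mu)\otimes V_1^{\otimes n}\to M(\mu)\otimes V_1^{\otimes(n-2)}$ and $\eta_i=\mathrm{Id}_{M(\mu)}\otimes\mathrm{Id}_{V_1}^{\otimes(i-1)}\otimes\eta\otimes\mathrm{Id}_{V_1}^{\otimes(n-i-1)}: M(\mu)\otimes V_1^{\otimes (n-2)}\to M(\mu)\otimes V_1^{\otimes n}$ (acting on the $i$-th and $(i+1)$-st tensor factors $V_1$).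
   Context: Let $\mathbb{K}=\mathbb{C}(q,q^{\mu})$, where $q$ and $q^{\mu}$ are algebraically independent indeterminates; $[a]=\frac{q^{a}-q^{-a}}{q-q^{-1}}$ (so $[\mu+k]\neq0$ for integers $k$). $U_q(\mathfrak{sl}_2)$ is generated by $K^{\pm1},E,F$ with $KK^{-1}=K^{-1}K=1$, $KE=q^2EK$, $KF=q^{-2}FK$, $EF-FE=\frac{K-K^{-1}}{q-q^{-1}}$ and coproduct $\Delta(K^{\pm1})=K^{\pm1}\otimes K^{\pm1}$, $\Delta(F)=F\otimes1+K^{-1}\otimes F$, $\Delta(E)=E\otimes K+1\otimes E$; tensor products of modules carry the induced action. $V_1$ is the 2-dimensional module with basis $v_0,v_1$: $Kv_0=qv_0$, $Kv_1=q^{-1}v_1$, $Ev_0=0$, $Ev_1=v_0$, $Fv_0=v_1$, $Fv_1=0$. For $\lambda=\mu+k$ ($k\in\mathbb{Z}$), the Verma module $M(\lambda)$ has $\mathbb{K}$-basis $v_0,v_1,\dots$ with $Kv_i=q^{\lambda-2i}v_i$, $Ev_i=[i]v_{i-1}$, $Fv_i=[\lambda-i]v_{i+1}$, $v_{-1}=0$. For each such $\lambda$, the module maps $E_\lambda: M(\lambda)\otimes V_1\to M(\lambda+1)$ and $F_\lambda: M(\lambda+1)\to M(\lambda)\otimes V_1$ are defined by $E_\lambda(v_i\otimes v_0)=q^iv_i$, $E_\lambda(v_i\otimes v_1)=v_{i+1}$, $F_\lambda(v_i)=[\lambda+1-i]\,v_i\otimes v_0+q^{i-\lambda-1}[i]\,v_{i-1}\otimes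 v_1$. For $j\ge0$, $E_{\lambda,j}=E_\lambda\otimes\mathrm{Id}_{V_1}^{\otimes j}$ and $F_{\lambda,j}=F_\lambda\otimes\mathrm{Id}_{V_1}^{\otimes j}$ (with $E_{\lambda,0}=E_\lambda$, $F_{\lambda,0}=F_\lambda$); compositions are read right to left. The module maps $\varepsilon: V_1\otimes V_1\to\mathbb{K}$ and $\eta:\mathbb{K}\to V_1\otimes V_1$ are given by $\varepsilon(v_0\otimes v_0)=\varepsilon(v_1\otimes v_1)=0$, $\varepsilon(v_0\otimes v_1)=-q$, $\varepsilon(v_1\otimes v_0)=1$, and $\eta(1)=v_0\otimes v_1-q^{-1}v_1\otimes v_0$; tensoring with $\mathbb{K}$ is identified with the identity. *)

(* Defs.v *)
(* Concrete field K = C(q, q^mu) realised as the fraction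
   field of C[X_0, X_1] with q := X_0, q^mu := X_1, C := complex numbers
   (complex Rdefinitions.R, R = Stdlib reals). *)
From mathcomp Require Import all_boot all_algebra.
From mathcomp Require Import complex Rstruct.
From mathcomp Require Import mpoly fraction.

Set Implicit Arguments.
Unset Strict Implicit.
Unset Printing Implicit Defensive.

Import GRing.Theory.
Local Open Scope ring_scope.

Definition Cfield : fieldType := complex Rdefinitions.R.
Definition Kfield : fieldType := {fraction {mpoly Cfield[2]}}.
Definition qK : Kfield := tofrac ('X_(0 : 'I_2) : {mpoly Cfield[2]}).
Definition qmuK : Kfield := tofrac ('X_(1 : 'I_2) : {mpoly Cfield[2]}).

Section Generic.
Variables (K : fieldType) (q Q : K).   (* Q stands for q^mu *)

(* quantum integers: [n] for an integer n, and [mu + k] *)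
Definition qint (n : int) : K := (q ^ n - q ^ (- n)) / (q - q^-1).
Definition qmu (k : int) : K := (Q * q ^ k - (Q * q ^ k)^-1) / (q - q^-1).

(* The space M(lambda) (x) V_1^{(x) n}: the basis vector
   v_i (x) v_{w_1} (x) ... (x) v_{w_n}  (w_j = false means v_0, true means v_1)
   is encoded as the function sending w to the polynomial 'X^i; thus a vector
   is a function from words to polynomials (finite linear combinations). *)
Definition vec (n : nat) := {ffun n.-tuple bool -> {poly K}}.

Definition bvec n (i : nat) (w : n.-tuple bool) : vec n :=
  [ffun w' => if w' == w then 'X^i else 0].

Definition linext n m (f : nat -> n.-tuple bool -> vec m) (x : vec n) : vec m :=
  \sum_(w : n.-tuple bool) \sum_(i < size (x w)) (x w)`_i *: f i w.

Definition upd n (w : n.-tuple bool) (j : 'I_n) (b : bool) : n.-tuple bool :=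
  [tuple (if k == j then b else tnth w k) | k < n].

(* eigenvalue of K on v_b in V_1 *)
Definition Kscal (b : bool) : K := if b then q^-1 else q.

(* eigenvalue of K on v_i in M(mu + k) *)
Definition Kver (k : int) (i : nat) : K := Q * q ^ (k - (i%:Z *+ 2)).

(* action of the generators on M(mu + k) (x) V_1^{(x) n}, via the iterated
   coproduct: Delta(K) = K(x)K, Delta(E) = E(x)K + 1(x)E,
   Delta(F) = F(x)1 + K^-1(x)F *)
Definition actK (k : int) n : vec n -> vec n :=
  linext (fun i w => (Kver k i * \prod_(j < n) Kscal (tnth w j)) *: bvec i w).

Definition actKi (k : int) n : vec n -> vec n :=
  linext (fun i w => (Kver k i * \prod_(j < n) Kscal (tnth w j))^-1 *: bvec i w).

Definition actE (k : int) n : vec n -> vec n :=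
  linext (fun i w =>
    (if i is i'.+1 then (qint i%:Z * \prod_(j < n) Kscal (tnth w j)) *: bvec i' w
     else 0)
    + \sum_(j < n | tnth w j)
        (\prod_(l < n | (j < l)%N) Kscal (tnth w l)) *: bvec i (upd w j false)).

Definition actF (k : int) n : vec n -> vec n :=
  linext (fun i w =>
    qmu (k - i%:Z) *: bvec i.+1 w
    + \sum_(j < n | ~~ tnth w j)
        ((Kver k i)^-1 * \prod_(l < n | (l < j)%N) (Kscal (tnth w l))^-1)
          *: bvec i (upd w j true)).

Definition is_module_endo (k : int) n (f : vec n -> vec n) : Prop :=
  [/\ forall x, f (actK k x) = actK k (f x),
      forall x, f (actKi k x) = actKi k (f x),
      forall x, f (actE k x) = actE k (f x) &
      forall x, f (actF k x) = actF k (f x)].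

(* E_{lambda, j} : M(lambda) (x) V_1 (x) V_1^{(x) j} -> M(lambda+1) (x) V_1^{(x) j},
   lambda = mu + k (E_lambda does not depend on lambda):
   E(v_i (x) v_0) = q^i v_i,  E(v_i (x) v_1) = v_{i+1}. *)
Definition Emap (k : int) j : vec j.+1 -> vec j :=
  linext (fun i (w : j.+1.-tuple bool) =>
    if thead w then bvec i.+1 (behead_tuple w)
    else q ^+ i *: bvec i (behead_tuple w)).

(* F_{lambda, j} : M(lambda+1) (x) V_1^{(x) j} -> M(lambda) (x) V_1 (x) V_1^{(x) j}:
   F(v_i) = [lambda+1-i] v_i (x) v_0 + q^{i-lambda-1} [i] v_{i-1} (x) v_1. *)
Definition Fmap (k : int) j : vec j -> vec j.+1 :=
  linext (fun i (w : j.-tuple bool) =>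
    qmu (k + 1 - i%:Z) *: bvec i (cons_tuple false w)
    + (if i is i'.+1 then (q ^ (i%:Z - k - 1) / Q * qint i%:Z)
                          *: bvec i' (cons_tuple true w)
       else 0)).

(* Gchain m k = F_{mu+k, m-1} F_{mu+k+1, m-2} ... F_{mu+k+m-1}
                E_{mu+k+m-1} ... E_{mu+k+1, m-2} E_{mu+k, m-1}
   (an endomorphism of M(mu+k) (x) V_1^{(x) m}) *)
Fixpoint Gchain (m : nat) (k : int) : vec m -> vec m :=
  match m return vec m -> vec m with
  | 0 => id
  | m'.+1 => fun x => Fmap k (@Gchain m' (k + 1) (Emap k x))
  end.

Definition Pmu (n : nat) (x : vec n) : vec n :=
  (\prod_(1 <= j < n.+1) qmu j%:Z)^-1 *: @Gchain n 0 x.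

(* epsilon_i : M(mu) (x) V_1^{(x) n} -> M(mu) (x) V_1^{(x) (n-2)}, contracting
   the i-th and (i+1)-st factors V_1 (word positions i-1, i, 0-based):
   eps(v0 v0) = eps(v1 v1) = 0, eps(v0 v1) = -q, eps(v1 v0) = 1 *)
Definition epsc (b c : bool) : K :=
  match b, c with
  | false, true => - q
  | true, false => 1
  | _, _ => 0
  end.

Definition eps_i n (i : nat) : vec n -> vec (n - 2) :=
  linext (fun k (w : n.-tuple bool) =>
    epsc (nth false w i.-1) (nth false w i)
      *: bvec k (insubd (nseq_tuple (n - 2) false)
                        (take i.-1 w ++ drop i.+1 w))).

(* eta_i : M(mu) (x) V_1^{(x) (n-2)} -> M(mu) (x) V_1^{(x) n}, inserting
   eta(1) = v0 (x) v1 - q^-1 v1 (x) v0 at positions i, i+1 *)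
Definition eta_i n (i : nat) : vec (n - 2) -> vec n :=
  linext (fun k (w : (n - 2).-tuple bool) =>
    let ins p := insubd (nseq_tuple n false) (take i.-1 w ++ p ++ drop i.-1 w) in
    bvec k (ins [:: false; true]) - q^-1 *: bvec k (ins [:: true; false])).

End Generic.

(* Main.v *)
Require Import Defs.
From mathcomp Require Import all_boot all_algebra.
From mathcomp Require Import ring zify.
From mathcomp Require Import complex Rstruct mpoly fraction.
Import GRing.Theory.
Local Open Scope ring_scope.

Set Implicit Arguments.
Unset Strict Implicit.
Unset Printing Implicit Defensive.

Section Lin.
Variable K : fieldType.

Definition islin n m (A : vec K n -> vec K m) :=
  forall (a : K) x y, A (a *: x + y) = a *: A x + A y.

Lemma lin0 n m (A : vec K n -> vec K m) : islin A -> A 0 = 0.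
Proof.
move=> h; have := h 1 0 0; rewrite scaler0 add0r scale1r => e.
by apply: (@addrI _ (A 0)); rewrite addr0 -e.
Qed.

Lemma linD n m (A : vec K n -> vec K m) : islin A -> forall x y, A (x + y) = A x + A y.
Proof. by move=> h x y; have := h 1 x y; rewrite !scale1r. Qed.

Lemma linZ n m (A : vec K n -> vec K m) : islin A -> forall a x, A (a *: x) = a *: A x.
Proof. by move=> h a x; rewrite -[a *: x]addr0 h (lin0 h) addr0. Qed.

Lemma linN n m (A : vec K n -> vec K m) : islin A -> forall x, A (- x) = - A x.
Proof. by move=> h x; rewrite -scaleN1r linZ // scaleN1r. Qed.

Lemma linB n m (A : vec K n -> vec K m) : islin A -> forall x y, A (x - y) = A x - A y.
Proof. by move=> h x y; rewrite linD // linN. Qed.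

Lemma linsum n m (A : vec K n -> vec K m) : islin A ->
  forall I (r : seq I) (P : pred I) (F : I -> vec K n),
  A (\sum_(i <- r | P i) F i) = \sum_(i <- r | P i) A (F i).
Proof.
move=> h I r P F; elim/big_rec2: _ => [|i y1 y2 _ <-]; first exact: lin0.
exact: linD.
Qed.

Lemma lin_comp n m p (A : vec K m -> vec K p) (B : vec K n -> vec K m) :
  islin A -> islin B -> islin (fun x => A (B x)).
Proof. by move=> hA hB a x y; rewrite hB hA. Qed.

Lemma lin_scale n m (c : K) (A : vec K n -> vec K m) : islin A -> islin (fun x => c *: A x).
Proof. by move=> hA a x y; rewrite hA scalerDr !scalerA mulrC. Qed.

Lemma lin_id n : islin (@id (vec K n)).
Proof. by []. Qed.

Lemma sum_widen (p : {poly K}) (V : lmodType K) (g : nat -> V) N :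
  (size p <= N)%N ->
  \sum_(i < size p) p`_i *: g i = \sum_(i < N) p`_i *: g i.
Proof.
move=> hN; rewrite (big_ord_widen N (fun i => p`_i *: g i) hN) big_mkcond /=.
apply: eq_bigr => i _; case: ifP => // /negbT; rewrite -leqNgt => h.
by rewrite nth_default // scale0r.
Qed.

Lemma linextE n m (f : nat -> n.-tuple bool -> vec K m) (x : vec K n) N :
  (forall w, size (x w) <= N)%N ->
  linext f x = \sum_w \sum_(i < N) (x w)`_i *: f i w.
Proof. by move=> h; rewrite /linext; apply: eq_bigr => w _; rewrite (sum_widen (fun i => f i w) (h w)). Qed.

Definition szb n (x : vec K n) := (\sum_w size (x w))%N.

Lemma szb_ge n (x : vec K n) w : (size (x w) <= szb x)%N.
Proof. by rewrite /szb (bigD1 w isT) /= leq_addr. Qed.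

Lemma linext_lin n m (f : nat -> n.-tuple bool -> vec K m) : islin (linext f).
Proof.
move=> a x y; set N := (szb x + szb y)%N.
have hx w : (size (x w) <= N)%N by apply: leq_trans (szb_ge x w) (leq_addr _ _).
have hy w : (size (y w) <= N)%N by apply: leq_trans (szb_ge y w) (leq_addl _ _).
rewrite (linextE f (N := N)) ?(linextE f hx) ?(linextE f hy).
  rewrite scaler_sumr -big_split /=; apply: eq_bigr => w _.
  rewrite scaler_sumr -big_split /=; apply: eq_bigr => i _.
  by rewrite !ffunE coefD coefZ scalerDl scalerA.
move=> w; rewrite !ffunE; apply: leq_trans (size_polyD _ _) _.
rewrite geq_max (hy w) andbT; apply: leq_trans (size_scale_leq _ _) _ => //.
Qed.

Lemma linext_bvec n m (f : nat -> n.-tuple bool -> vec K m) i w :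
  linext f (bvec K i w) = f i w.
Proof.
rewrite (linextE f (N := i.+1)); last first.
  by move=> w'; rewrite ffunE; case: eqP => _; rewrite ?size_polyXn ?size_poly0.
rewrite (bigD1 w) //= [X in _ + X]big1 ?addr0; last first.
  move=> w' /negbTE hw; apply: big1 => j _; by rewrite ffunE hw coef0 scale0r.
rewrite ffunE eqxx (bigD1 (Ordinal (ltnSn i))) //= big1 ?addr0.
  by rewrite coefXn eqxx scale1r.
move=> j hj; rewrite coefXn; case: eqP => [hji|]; last by rewrite scale0r.
by move: hj; rewrite -val_eqE /= hji eqxx.
Qed.

Lemma vec_decomp n (x : vec K n) :
  x = \sum_w \sum_(i < size (x w)) (x w)`_i *: bvec K i w.
Proof.
apply/ffunP => u; rewrite sum_ffunE (bigD1 u) //= [X in _ + X]big1 ?addr0.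
  rewrite sum_ffunE; under eq_bigr do rewrite ffunE ffunE eqxx.
  by rewrite -poly_def coefK.
move=> w /negbTE hw; rewrite sum_ffunE; apply: big1 => i _.
by rewrite !ffunE eq_sym hw scaler0.
Qed.

Lemma lin_ext n m (A B : vec K n -> vec K m) : islin A -> islin B ->
  (forall i w, A (bvec K i w) = B (bvec K i w)) -> forall x, A x = B x.
Proof.
move=> hA hB h x; rewrite (vec_decomp x) !linsum //; apply: eq_bigr => w _.
rewrite !linsum //; apply: eq_bigr => i _; by rewrite !linZ // h.
Qed.

End Lin.

Section Gen.
Variables (K : fieldType) (q Q : K).
Hypotheses (hq : q != 0) (hQ : Q != 0) (hqq : q * q - 1 != 0).

Local Notation vec := (vec K).
Local Notation bvec := (bvec K).

Lemma qk_neq0 (k : int) : q ^ k != 0. Proof. exact: expfz_neq0. Qed.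
Lemma qn_neq0 (i : nat) : q ^+ i != 0. Proof. exact: expf_neq0. Qed.

Ltac qn := rewrite /qint /qmu /Kver /Kscal ?mulr2n ?opprD ?opprK ?(expfzDr _ _ hq)
  -?invr_expz -?exprnP ?expr1z ?exprS ?expr0 ?invr1 ?mulr1 ?invrK ?div1r.

Lemma behead_cons n (b : bool) (w : n.-tuple bool) :
  behead_tuple [tuple of b :: w] = w.
Proof. exact: val_inj. Qed.

Lemma upd_cons0 n (b c : bool) (w : n.-tuple bool) :
  upd [tuple of b :: w] ord0 c = [tuple of c :: w].
Proof.
apply: eq_from_tnth => k; rewrite tnth_mktuple.
case: (unliftP ord0 k) => [k'|] ->; last by rewrite eqxx !tnth0.
by rewrite eq_sym (negbTE (neq_lift _ _)) !tnthS.
Qed.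

Lemma upd_consS n (b c : bool) (w : n.-tuple bool) (j : 'I_n) :
  upd [tuple of b :: w] (lift ord0 j) c = [tuple of b :: upd w j c].
Proof.
apply: eq_from_tnth => k; rewrite tnth_mktuple.
case: (unliftP ord0 k) => [k'|] ->; last first.
  by rewrite (negbTE (neq_lift _ _)) !tnth0.
by rewrite !tnthS tnth_mktuple (inj_eq (@lift_inj _ ord0)).
Qed.

Lemma tnth_upd n (w : n.-tuple bool) j c k :
  tnth (upd w j c) k = if k == j then c else tnth w k.
Proof. by rewrite tnth_mktuple. Qed.

Lemma bvecE n i (w u : n.-tuple bool) : bvec i w u = if u == w then 'X^i else 0.
Proof. by rewrite ffunE. Qed.

Lemma sum_pos_split (V : zmodType) n (P : pred 'I_n.+1) (F : 'I_n.+1 -> V) :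
  \sum_(j < n.+1 | P j) F j =
  (if P ord0 then F ord0 else 0) + \sum_(j < n | P (lift ord0 j)) F (lift ord0 j).
Proof. by rewrite big_mkcond big_ord_recl -big_mkcond. Qed.

Lemma prod_all_cons n b (w : n.-tuple bool) :
  \prod_(j < n.+1) Kscal q (tnth [tuple of b :: w] j) =
  Kscal q b * \prod_(j < n) Kscal q (tnth w j).
Proof. by rewrite big_ord_recl tnth0; under eq_bigr do rewrite tnthS. Qed.

Lemma prod_gt_cons0 n b (w : n.-tuple bool) :
  \prod_(l < n.+1 | (@ord0 n < l)%N) Kscal q (tnth [tuple of b :: w] l) =
  \prod_(l < n) Kscal q (tnth w l).
Proof.
rewrite big_mkcond big_ord_recl /= mul1r; apply: eq_bigr => l _.
by rewrite tnthS.
Qed.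

Lemma prod_gt_consS n b (w : n.-tuple bool) (j : 'I_n) :
  \prod_(l < n.+1 | (lift ord0 j < l)%N) Kscal q (tnth [tuple of b :: w] l) =
  \prod_(l < n | (j < l)%N) Kscal q (tnth w l).
Proof.
rewrite big_mkcond big_ord_recl /= mul1r [RHS]big_mkcond; apply: eq_bigr => l _.
by rewrite /bump !leq0n !add1n ltnS tnthS.
Qed.

Lemma prod_lt_cons0 n b (w : n.-tuple bool) :
  \prod_(l < n.+1 | (l < @ord0 n)%N) (Kscal q (tnth [tuple of b :: w] l))^-1 = 1.
Proof. by rewrite big1. Qed.

Lemma prod_lt_consS n b (w : n.-tuple bool) (j : 'I_n) :
  \prod_(l < n.+1 | (l < lift ord0 j)%N) (Kscal q (tnth [tuple of b :: w] l))^-1 =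
  (Kscal q b)^-1 * \prod_(l < n | (l < j)%N) (Kscal q (tnth w l))^-1.
Proof.
rewrite big_mkcond big_ord_recl /= tnth0 [in RHS]big_mkcond; congr (_ * _).
by apply: eq_bigr => l _; rewrite /bump !leq0n !add1n ltnS tnthS.
Qed.

Definition PiK n (w : n.-tuple bool) := \prod_(j < n) Kscal q (tnth w j).

Lemma Kscal_neq0 b : Kscal q b != 0.
Proof. by case: b; rewrite /= ?invr_eq0. Qed.

Lemma PiK_neq0 n (w : n.-tuple bool) : PiK w != 0.
Proof. by rewrite /PiK; apply/prodf_neq0 => j _; apply: Kscal_neq0. Qed.

Ltac fld := field; by rewrite ?hq ?hQ ?hqq ?qk_neq0 ?qn_neq0 ?PiK_neq0.

Lemma qint0 : qint q 0 = 0.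
Proof. by rewrite /qint oppr0 subrr mul0r. Qed.

Lemma qint0' : qint q 0%:Z = 0.
Proof. exact: qint0. Qed.

Lemma Emap_b k n b i (w : n.-tuple bool) :
  Emap q k (bvec i [tuple of b :: w]) = if b then bvec i.+1 w else q ^+ i *: bvec i w.
Proof. by rewrite /Emap linext_bvec theadE behead_cons. Qed.

Lemma Fmap_b k n i (w : n.-tuple bool) :
  Fmap q Q k (bvec i w) = qmu q Q (k + 1 - i%:Z) *: bvec i [tuple of false :: w]
    + (q ^ (i%:Z - k - 1) / Q * qint q i%:Z) *: bvec i.-1 [tuple of true :: w].
Proof. by rewrite /Fmap linext_bvec; case: i => [|i] //=; rewrite qint0 mulr0 scale0r. Qed.

Lemma actK_b k n i (w : n.-tuple bool) :
  actK q Q k (bvec i w) = (Kver q Q k i * PiK w) *: bvec i w.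
Proof. by rewrite /actK linext_bvec. Qed.

Lemma actKi_b k n i (w : n.-tuple bool) :
  actKi q Q k (bvec i w) = (Kver q Q k i * PiK w)^-1 *: bvec i w.
Proof. by rewrite /actKi linext_bvec. Qed.

Lemma actE_b k n i (w : n.-tuple bool) :
  actE q k (bvec i w) = (qint q i%:Z * PiK w) *: bvec i.-1 w
    + \sum_(j < n | tnth w j) (\prod_(l < n | (j < l)%N) Kscal q (tnth w l)) *: bvec i (upd w j false).
Proof. by rewrite /actE linext_bvec; case: i => [|i] //=; rewrite qint0 mul0r scale0r. Qed.

Lemma actF_b k n i (w : n.-tuple bool) :
  actF q Q k (bvec i w) = qmu q Q (k - i%:Z) *: bvec i.+1 w
    + \sum_(j < n | ~~ tnth w j)
        ((Kver q Q k i)^-1 * \prod_(l < n | (l < j)%N) (Kscal q (tnth w l))^-1)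
          *: bvec i (upd w j true).
Proof. by rewrite /actF linext_bvec. Qed.

Lemma PiK_cons n b (w : n.-tuple bool) : PiK [tuple of b :: w] = Kscal q b * PiK w.
Proof. exact: prod_all_cons. Qed.

Lemma actE_cons k n i b (w : n.-tuple bool) :
  actE q k (bvec i [tuple of b :: w]) =
    (qint q i%:Z * (Kscal q b * PiK w)) *: bvec i.-1 [tuple of b :: w]
    + ((if b then PiK w *: bvec i [tuple of false :: w] else 0)
    + \sum_(j < n | tnth w j) (\prod_(l < n | (j < l)%N) Kscal q (tnth w l))
         *: bvec i [tuple of b :: upd w j false]).
Proof.
rewrite actE_b PiK_cons sum_pos_split tnth0 prod_gt_cons0 upd_cons0; congr (_ + (_ + _)).
by apply: eq_big => [j|j _]; rewrite ?tnthS // prod_gt_consS upd_consS.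
Qed.

Lemma actF_cons k n i b (w : n.-tuple bool) :
  actF q Q k (bvec i [tuple of b :: w]) =
    qmu q Q (k - i%:Z) *: bvec i.+1 [tuple of b :: w]
    + ((if ~~ b then ((Kver q Q k i)^-1 * 1) *: bvec i [tuple of true :: w] else 0)
    + \sum_(j < n | ~~ tnth w j)
        ((Kver q Q k i)^-1 * ((Kscal q b)^-1 * \prod_(l < n | (l < j)%N) (Kscal q (tnth w l))^-1))
          *: bvec i [tuple of b :: upd w j true]).
Proof.
rewrite actF_b sum_pos_split tnth0 prod_lt_cons0 upd_cons0; congr (_ + (_ + _)).
by apply: eq_big => [j|j _]; rewrite ?tnthS // prod_lt_consS upd_consS.
Qed.

Lemma actE_cons_t k n i (w : n.-tuple bool) :
  actE q k (bvec i [tuple of true :: w]) =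
    (qint q i%:Z * (Kscal q true * PiK w)) *: bvec i.-1 [tuple of true :: w]
    + (PiK w *: bvec i [tuple of false :: w]
    + \sum_(j < n | tnth w j) (\prod_(l < n | (j < l)%N) Kscal q (tnth w l))
         *: bvec i [tuple of true :: upd w j false]).
Proof. exact: actE_cons. Qed.

Lemma actE_cons_f k n i (w : n.-tuple bool) :
  actE q k (bvec i [tuple of false :: w]) =
    (qint q i%:Z * (Kscal q false * PiK w)) *: bvec i.-1 [tuple of false :: w]
    + (0
    + \sum_(j < n | tnth w j) (\prod_(l < n | (j < l)%N) Kscal q (tnth w l))
         *: bvec i [tuple of false :: upd w j false]).
Proof. exact: actE_cons. Qed.

Lemma actF_cons_t k n i (w : n.-tuple bool) :
  actF q Q k (bvec i [tuple of true :: w]) =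
    qmu q Q (k - i%:Z) *: bvec i.+1 [tuple of true :: w]
    + (0
    + \sum_(j < n | ~~ tnth w j)
        ((Kver q Q k i)^-1 * ((Kscal q true)^-1 * \prod_(l < n | (l < j)%N) (Kscal q (tnth w l))^-1))
          *: bvec i [tuple of true :: upd w j true]).
Proof. exact: actF_cons. Qed.

Lemma actF_cons_f k n i (w : n.-tuple bool) :
  actF q Q k (bvec i [tuple of false :: w]) =
    qmu q Q (k - i%:Z) *: bvec i.+1 [tuple of false :: w]
    + (((Kver q Q k i)^-1 * 1) *: bvec i [tuple of true :: w]
    + \sum_(j < n | ~~ tnth w j)
        ((Kver q Q k i)^-1 * ((Kscal q false)^-1 * \prod_(l < n | (l < j)%N) (Kscal q (tnth w l))^-1))
          *: bvec i [tuple of false :: upd w j true]).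
Proof. exact: actF_cons. Qed.

Lemma rearrE (V : lmodType K) (A B : V) (I : Type) (r : seq I) (P : pred I)
    (d e f : I -> K) (X Y : I -> V) al m1 c1 m2 c be ga p :
  al * m1 = m2 * be + c * p -> al * c1 = c * ga ->
  (forall j, d j * m2 = m2 * e j) -> (forall j, d j * c = c * f j) ->
  al *: (m1 *: A + c1 *: B) + \sum_(j <- r | P j) d j *: (m2 *: X j + c *: Y j) =
  m2 *: (be *: A + (0 + \sum_(j <- r | P j) e j *: X j))
  + c *: (ga *: B + (p *: A + \sum_(j <- r | P j) f j *: Y j)).
Proof.
move=> h1 h2 h3 h4.
rewrite add0r !scalerDr !scalerA h1 h2 scalerDl !scaler_sumr.
have -> : \sum_(j <- r | P j) d j *: (m2 *: X j + c *: Y j) =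
  \sum_(j <- r | P j) (m2 * e j) *: X j + \sum_(j <- r | P j) (c * f j) *: Y j.
  by rewrite -big_split; apply: eq_bigr => j _; rewrite scalerDr !scalerA h3 h4.
under [in RHS]eq_bigr do rewrite scalerA.
under [X in _ = _ + (_ + (_ + X))]eq_bigr do rewrite scalerA.
set a1 := (m2 * be) *: A; set a2 := (c * p) *: A; set b1 := (c * ga) *: B.
set s1 := \sum_(j <- r | P j) (m2 * e j) *: X j.
set s2 := \sum_(j <- r | P j) (c * f j) *: Y j.
rewrite -!addrA; congr (_ + _).
by rewrite [RHS]addrCA [in RHS](addrCA s1) addrCA.
Qed.

Lemma rearrF (V : lmodType K) (A B B' : V) (I : Type) (r : seq I) (P : pred I)
    (e g h : I -> K) (X Y : I -> V) m m' c1 c a b d :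
  m * m' = m * a -> m * c1 = m * b + c * d -> (c * d) *: B' = (c * d) *: B ->
  (forall j, e j * m = m * g j) -> (forall j, e j * c = c * h j) ->
  m *: (m' *: A + c1 *: B) + \sum_(j <- r | P j) e j *: (m *: X j + c *: Y j) =
  m *: (a *: A + (b *: B + \sum_(j <- r | P j) g j *: X j))
  + c *: (d *: B' + (0 + \sum_(j <- r | P j) h j *: Y j)).
Proof.
move=> h1 h2 hB h3 h4.
rewrite add0r !scalerDr !scalerA hB h1 h2 scalerDl !scaler_sumr.
have -> : \sum_(j <- r | P j) e j *: (m *: X j + c *: Y j) =
  \sum_(j <- r | P j) (m * g j) *: X j + \sum_(j <- r | P j) (c * h j) *: Y j.
  by rewrite -big_split; apply: eq_bigr => j _; rewrite scalerDr !scalerA h3 h4.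
under [in RHS]eq_bigr do rewrite scalerA.
under [X in _ = _ + (_ + X)]eq_bigr do rewrite scalerA.
set a1 := (m * a) *: A; set a2 := (m * b) *: B; set b1 := (c * d) *: B.
set s1 := \sum_(j <- r | P j) (m * g j) *: X j.
set s2 := \sum_(j <- r | P j) (c * h j) *: Y j.
rewrite -!addrA; congr (_ + _).
by rewrite (addrCA b1).
Qed.

Lemma Emap_lin k n : islin (@Emap K q k n). Proof. exact: linext_lin. Qed.
Lemma Fmap_lin k n : islin (@Fmap K q Q k n). Proof. exact: linext_lin. Qed.
Lemma actK_lin k n : islin (@actK K q Q k n). Proof. exact: linext_lin. Qed.
Lemma actKi_lin k n : islin (@actKi K q Q k n). Proof. exact: linext_lin. Qed.
Lemma actE_lin k n : islin (@actE K q k n). Proof. exact: linext_lin. Qed.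
Lemma actF_lin k n : islin (@actF K q Q k n). Proof. exact: linext_lin. Qed.

Lemma EmapD (k : int) n (x y : vec n.+1) : (@Emap K q k n) (x + y) = (@Emap K q k n) x + (@Emap K q k n) y.
Proof. exact: (linD (@Emap_lin k n)). Qed.
Lemma EmapB (k : int) n (x y : vec n.+1) : (@Emap K q k n) (x - y) = (@Emap K q k n) x - (@Emap K q k n) y.
Proof. exact: (linB (@Emap_lin k n)). Qed.
Lemma EmapZ (k : int) n a (x : vec n.+1) : (@Emap K q k n) (a *: x) = a *: (@Emap K q k n) x.
Proof. exact: (linZ (@Emap_lin k n)). Qed.
Lemma Emap0 (k : int) n : (@Emap K q k n) 0 = 0.
Proof. exact: (lin0 (@Emap_lin k n)). Qed.
Lemma Emap_sum (k : int) n I (r : seq I) (P : pred I) (F : I -> vec n.+1) :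
  (@Emap K q k n) (\sum_(i <- r | P i) F i) = \sum_(i <- r | P i) (@Emap K q k n) (F i).
Proof. exact: (linsum (@Emap_lin k n)). Qed.

Lemma FmapD (k : int) n (x y : vec n) : (@Fmap K q Q k n) (x + y) = (@Fmap K q Q k n) x + (@Fmap K q Q k n) y.
Proof. exact: (linD (@Fmap_lin k n)). Qed.
Lemma FmapB (k : int) n (x y : vec n) : (@Fmap K q Q k n) (x - y) = (@Fmap K q Q k n) x - (@Fmap K q Q k n) y.
Proof. exact: (linB (@Fmap_lin k n)). Qed.
Lemma FmapZ (k : int) n a (x : vec n) : (@Fmap K q Q k n) (a *: x) = a *: (@Fmap K q Q k n) x.
Proof. exact: (linZ (@Fmap_lin k n)). Qed.
Lemma Fmap0 (k : int) n : (@Fmap K q Q k n) 0 = 0.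
Proof. exact: (lin0 (@Fmap_lin k n)). Qed.
Lemma Fmap_sum (k : int) n I (r : seq I) (P : pred I) (F : I -> vec n) :
  (@Fmap K q Q k n) (\sum_(i <- r | P i) F i) = \sum_(i <- r | P i) (@Fmap K q Q k n) (F i).
Proof. exact: (linsum (@Fmap_lin k n)). Qed.

Lemma actKD (k : int) n (x y : vec n) : (@actK K q Q k n) (x + y) = (@actK K q Q k n) x + (@actK K q Q k n) y.
Proof. exact: (linD (@actK_lin k n)). Qed.
Lemma actKB (k : int) n (x y : vec n) : (@actK K q Q k n) (x - y) = (@actK K q Q k n) x - (@actK K q Q k n) y.
Proof. exact: (linB (@actK_lin k n)). Qed.
Lemma actKZ (k : int) n a (x : vec n) : (@actK K q Q k n) (a *: x) = a *: (@actK K q Q k n) x.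
Proof. exact: (linZ (@actK_lin k n)). Qed.
Lemma actK0 (k : int) n : (@actK K q Q k n) 0 = 0.
Proof. exact: (lin0 (@actK_lin k n)). Qed.
Lemma actK_sum (k : int) n I (r : seq I) (P : pred I) (F : I -> vec n) :
  (@actK K q Q k n) (\sum_(i <- r | P i) F i) = \sum_(i <- r | P i) (@actK K q Q k n) (F i).
Proof. exact: (linsum (@actK_lin k n)). Qed.

Lemma actKiD (k : int) n (x y : vec n) : (@actKi K q Q k n) (x + y) = (@actKi K q Q k n) x + (@actKi K q Q k n) y.
Proof. exact: (linD (@actKi_lin k n)). Qed.
Lemma actKiB (k : int) n (x y : vec n) : (@actKi K q Q k n) (x - y) = (@actKi K q Q k n) x - (@actKi K q Q k n) y.
Proof. exact: (linB (@actKi_lin k n)). Qed.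
Lemma actKiZ (k : int) n a (x : vec n) : (@actKi K q Q k n) (a *: x) = a *: (@actKi K q Q k n) x.
Proof. exact: (linZ (@actKi_lin k n)). Qed.
Lemma actKi0 (k : int) n : (@actKi K q Q k n) 0 = 0.
Proof. exact: (lin0 (@actKi_lin k n)). Qed.
Lemma actKi_sum (k : int) n I (r : seq I) (P : pred I) (F : I -> vec n) :
  (@actKi K q Q k n) (\sum_(i <- r | P i) F i) = \sum_(i <- r | P i) (@actKi K q Q k n) (F i).
Proof. exact: (linsum (@actKi_lin k n)). Qed.

Lemma actED (k : int) n (x y : vec n) : (@actE K q k n) (x + y) = (@actE K q k n) x + (@actE K q k n) y.
Proof. exact: (linD (@actE_lin k n)). Qed.
Lemma actEB (k : int) n (x y : vec n) : (@actE K q k n) (x - y) = (@actE K q k n) x - (@actE K q k n) y.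
Proof. exact: (linB (@actE_lin k n)). Qed.
Lemma actEZ (k : int) n a (x : vec n) : (@actE K q k n) (a *: x) = a *: (@actE K q k n) x.
Proof. exact: (linZ (@actE_lin k n)). Qed.
Lemma actE0 (k : int) n : (@actE K q k n) 0 = 0.
Proof. exact: (lin0 (@actE_lin k n)). Qed.
Lemma actE_sum (k : int) n I (r : seq I) (P : pred I) (F : I -> vec n) :
  (@actE K q k n) (\sum_(i <- r | P i) F i) = \sum_(i <- r | P i) (@actE K q k n) (F i).
Proof. exact: (linsum (@actE_lin k n)). Qed.

Lemma actFD (k : int) n (x y : vec n) : (@actF K q Q k n) (x + y) = (@actF K q Q k n) x + (@actF K q Q k n) y.
Proof. exact: (linD (@actF_lin k n)). Qed.
Lemma actFB (k : int) n (x y : vec n) : (@actF K q Q k n) (x - y) = (@actF K q Q k n) x - (@actF K q Q k n) y.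
Proof. exact: (linB (@actF_lin k n)). Qed.
Lemma actFZ (k : int) n a (x : vec n) : (@actF K q Q k n) (a *: x) = a *: (@actF K q Q k n) x.
Proof. exact: (linZ (@actF_lin k n)). Qed.
Lemma actF0 (k : int) n : (@actF K q Q k n) 0 = 0.
Proof. exact: (lin0 (@actF_lin k n)). Qed.
Lemma actF_sum (k : int) n I (r : seq I) (P : pred I) (F : I -> vec n) :
  (@actF K q Q k n) (\sum_(i <- r | P i) F i) = \sum_(i <- r | P i) (@actF K q Q k n) (F i).
Proof. exact: (linsum (@actF_lin k n)). Qed.

Lemma cons_ind n (P : n.+1.-tuple bool -> Prop) :
  (forall b (w : n.-tuple bool), P [tuple of b :: w]) -> forall w, P w.
Proof. by move=> h w; rewrite (tuple_eta w); apply: h. Qed.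

Lemma Emap_actK k n (x : vec n.+1) :
  Emap q k (actK q Q k x) = actK q Q (k + 1) (Emap q k x).
Proof.
apply: (@lin_ext K _ _ (fun x => Emap q k (actK q Q k x)) (fun x => actK q Q (k + 1) (Emap q k x))).
- by apply: lin_comp; [exact: Emap_lin | exact: actK_lin].
- by apply: lin_comp; [exact: actK_lin | exact: Emap_lin].
move=> i; apply: cons_ind => b w.
rewrite actK_b PiK_cons (linZ (@Emap_lin _ _)) Emap_b.
case: b; rewrite /= ?(linZ (@actK_lin _ _)) actK_b ?scalerA; congr (_ *: _); qn; fld.
Qed.

Lemma Emap_actKi k n (x : vec n.+1) :
  Emap q k (actKi q Q k x) = actKi q Q (k + 1) (Emap q k x).
Proof.
apply: (@lin_ext K _ _ (fun x => Emap q k (actKi q Q k x)) (fun x => actKi q Q (k + 1) (Emap q k x))).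
- by apply: lin_comp; [exact: Emap_lin | exact: actKi_lin].
- by apply: lin_comp; [exact: actKi_lin | exact: Emap_lin].
move=> i; apply: cons_ind => b w.
rewrite actKi_b PiK_cons EmapZ Emap_b.
case: b; rewrite /= ?actKiZ actKi_b ?scalerA; congr (_ *: _); qn; fld.
Qed.

Lemma Emap_actE k n (x : vec n.+1) :
  Emap q k (actE q k x) = actE q (k + 1) (Emap q k x).
Proof.
apply: (@lin_ext K _ _ (fun x => Emap q k (actE q k x)) (fun x => actE q (k + 1) (Emap q k x))).
- by apply: lin_comp; [exact: Emap_lin | exact: actE_lin].
- by apply: lin_comp; [exact: actE_lin | exact: Emap_lin].
move=> i; apply: cons_ind => b w.
rewrite actE_cons !EmapD EmapZ Emap_b Emap_sum.
under eq_bigr do rewrite EmapZ Emap_b.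
case: b => /=.
- rewrite EmapZ !Emap_b /= actE_b /=; case: i => [|i] /=.
    by rewrite qint0 !mul0r !scale0r !add0r scalerA; congr (_ *: _ + _); qn; fld.
  rewrite addrA scalerA -scalerDl; congr (_ *: _ + _); qn; fld.
- rewrite Emap0 add0r Emap_b actEZ actE_b scalerDr; case: i => [|i] /=.
    rewrite qint0 !mul0r !scale0r scaler0 !add0r scaler_sumr; apply: eq_bigr => j _.
    by rewrite !scalerA mulrC.
  congr (_ + _); first by rewrite !scalerA; congr (_ *: _); qn; fld.
  by rewrite scaler_sumr; apply: eq_bigr => j _; rewrite !scalerA mulrC.
Qed.

Lemma Emap_actF k n (x : vec n.+1) :
  Emap q k (actF q Q k x) = actF q Q (k + 1) (Emap q k x).
Proof.
apply: (@lin_ext K _ _ (fun x => Emap q k (actF q Q k x)) (fun x => actF q Q (k + 1) (Emap q k x))).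
- by apply: lin_comp; [exact: Emap_lin | exact: actF_lin].
- by apply: lin_comp; [exact: actF_lin | exact: Emap_lin].
move=> i; apply: cons_ind => b w.
rewrite actF_cons !EmapD EmapZ Emap_b Emap_sum.
under eq_bigr do rewrite EmapZ Emap_b.
case: b => /=.
- rewrite Emap0 add0r Emap_b actF_b; congr (_ *: _ + _); first by qn; fld.
  by apply: eq_bigr => j _; congr (_ *: _); move: (\prod_(l < n | _) _) => P; qn; fld.
- rewrite EmapZ !Emap_b /= actFZ actF_b scalerDr addrA !scalerA -scalerDl.
  congr (_ *: _ + _); first by qn; fld.
  rewrite scaler_sumr; apply: eq_bigr => j _; rewrite !scalerA; congr (_ *: _).
  by move: (\prod_(l < n | _) _) => P; qn; fld.
Qed.

Lemma Fmap_actK k n (y : vec n) :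
  Fmap q Q k (actK q Q (k + 1) y) = actK q Q k (Fmap q Q k y).
Proof.
apply: (@lin_ext K _ _ (fun x => Fmap q Q k (actK q Q (k + 1) x)) (fun x => actK q Q k (Fmap q Q k x))).
- by apply: lin_comp; [exact: Fmap_lin | exact: actK_lin].
- by apply: lin_comp; [exact: actK_lin | exact: Fmap_lin].
move=> i w; rewrite actK_b FmapZ Fmap_b actKD !actKZ !actK_b !PiK_cons scalerDr !scalerA.
case: i => [|i] /=; congr (_ *: _ + _ *: _); qn; fld.
Qed.

Lemma Fmap_actKi k n (y : vec n) :
  Fmap q Q k (actKi q Q (k + 1) y) = actKi q Q k (Fmap q Q k y).
Proof.
apply: (@lin_ext K _ _ (fun x => Fmap q Q k (actKi q Q (k + 1) x)) (fun x => actKi q Q k (Fmap q Q k x))).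
- by apply: lin_comp; [exact: Fmap_lin | exact: actKi_lin].
- by apply: lin_comp; [exact: actKi_lin | exact: Fmap_lin].
move=> i w; rewrite actKi_b FmapZ Fmap_b actKiD !actKiZ !actKi_b !PiK_cons scalerDr !scalerA.
case: i => [|i] /=; congr (_ *: _ + _ *: _); qn; fld.
Qed.

Lemma Fmap_actE k n (y : vec n) :
  Fmap q Q k (actE q (k + 1) y) = actE q k (Fmap q Q k y).
Proof.
apply: (@lin_ext K _ _ (fun x => Fmap q Q k (actE q (k + 1) x)) (fun x => actE q k (Fmap q Q k x))).
- by apply: lin_comp; [exact: Fmap_lin | exact: actE_lin].
- by apply: lin_comp; [exact: actE_lin | exact: Fmap_lin].
move=> i w; rewrite actE_b FmapD FmapZ Fmap_b Fmap_sum.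
under eq_bigr do rewrite FmapZ Fmap_b.
rewrite Fmap_b actED !actEZ actE_cons_f actE_cons_t.
apply: rearrE => [||j|j]; rewrite ?[_ * qmu _ _ _]mulrC ?[_ * (_ / Q * _)]mulrC //.
  case: i => [|i] /=; rewrite ?qint0' ?mul0r ?mulr0 ?add0r //; qn; fld.
case: i => [|i] /=; rewrite ?qint0' ?mul0r ?mulr0 //.
case: i => [|i] /=; rewrite ?qint0' ?mul0r ?mulr0 //; qn; fld.
Qed.

Lemma Fmap_actF k n (y : vec n) :
  Fmap q Q k (actF q Q (k + 1) y) = actF q Q k (Fmap q Q k y).
Proof.
apply: (@lin_ext K _ _ (fun x => Fmap q Q k (actF q Q (k + 1) x)) (fun x => actF q Q k (Fmap q Q k x))).
- by apply: lin_comp; [exact: Fmap_lin | exact: actF_lin].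
- by apply: lin_comp; [exact: actF_lin | exact: Fmap_lin].
move=> i w; rewrite actF_b FmapD FmapZ Fmap_b Fmap_sum.
under eq_bigr do rewrite FmapZ Fmap_b.
rewrite Fmap_b actFD !actFZ actF_cons_f actF_cons_t.
apply: rearrF => [|||j|j].
- by qn; fld.
- case: i => [|i] /=; rewrite ?qint0' ?mul0r ?mulr0 ?addr0 //; qn.
  1,2: fld.
- by case: i => [|i] /=; rewrite ?qint0' ?mulr0 ?mul0r ?scale0r.
- by move: (\prod_(l < n | _) _) => P; qn; fld.
- case: i => [|i] /=; rewrite ?qint0' ?mulr0 ?mul0r //;
  by move: (\prod_(l < n | _) _) => P; qn; fld.
Qed.

Lemma EF k n (y : vec n) : Emap q k (Fmap q Q k y) = qmu q Q (k + 1) *: y.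
Proof.
apply: (@lin_ext K _ _ (fun x => Emap q k (Fmap q Q k x)) (fun x => qmu q Q (k + 1) *: x)).
- by apply: lin_comp; [exact: Emap_lin | exact: Fmap_lin].
- exact: lin_scale (@lin_id K n).
move=> i w; rewrite Fmap_b EmapD !EmapZ !Emap_b scalerA.
case: i => [|i] /=; rewrite ?qint0' ?mulr0 ?scale0r ?addr0.
  by congr (_ *: _); qn; fld.
by rewrite -scalerDl; congr (_ *: _); qn; fld.
Qed.

Lemma Gchain_S m k (x : vec m.+1) :
  Gchain q Q k x = Fmap q Q k (Gchain q Q (k + 1) (Emap q k x)).
Proof. by []. Qed.

Lemma Gchain_lin m k : islin (@Gchain K q Q m k).
Proof.
elim: m k => [|m IH] k; first exact: lin_id.
by apply: lin_comp; [exact: Fmap_lin | apply: lin_comp; [exact: IH | exact: Emap_lin]].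
Qed.

Lemma Gchain_actK m k (x : vec m) : Gchain q Q k (actK q Q k x) = actK q Q k (Gchain q Q k x).
Proof.
elim: m k x => [|m IH] k x //.
by rewrite !Gchain_S Emap_actK IH Fmap_actK.
Qed.

Lemma Gchain_actKi m k (x : vec m) : Gchain q Q k (actKi q Q k x) = actKi q Q k (Gchain q Q k x).
Proof.
elim: m k x => [|m IH] k x //.
by rewrite !Gchain_S Emap_actKi IH Fmap_actKi.
Qed.

Lemma Gchain_actE m k (x : vec m) : Gchain q Q k (actE q k x) = actE q k (Gchain q Q k x).
Proof.
elim: m k x => [|m IH] k x //.
by rewrite !Gchain_S Emap_actE IH Fmap_actE.
Qed.

Lemma Gchain_actF m k (x : vec m) : Gchain q Q k (actF q Q k x) = actF q Q k (Gchain q Q k x).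
Proof.
elim: m k x => [|m IH] k x //.
by rewrite !Gchain_S Emap_actF IH Fmap_actF.
Qed.

Definition cst m (k : int) := \prod_(1 <= j < m.+1) qmu q Q (k + j%:Z).

Lemma Gchain_sq m k (x : vec m) :
  Gchain q Q k (Gchain q Q k x) = cst m k *: Gchain q Q k x.
Proof.
elim: m k x => [|m IH] k x; first by rewrite /cst big_geq // scale1r.
rewrite !Gchain_S EF (linZ (@Gchain_lin _ _)) IH !FmapZ scalerA; congr (_ *: _).
rewrite /cst [RHS]big_nat_recl //; congr (_ * _).
by apply: eq_bigr => j _; rewrite -addrA -PoszD add1n.
Qed.

Fixpoint Echain m (k : int) : vec m -> vec 0 :=
  match m return vec m -> vec 0 with
  | 0 => id
  | m'.+1 => fun x => @Echain m' (k + 1) (Emap q k x)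
  end.

Fixpoint Fchain m (k : int) : vec 0 -> vec m :=
  match m return vec 0 -> vec m with
  | 0 => id
  | m'.+1 => fun y => Fmap q Q k (@Fchain m' (k + 1) y)
  end.

Lemma Gchain_EF m k (x : vec m) : Gchain q Q k x = Fchain m k (Echain k x).
Proof. by elim: m k x => [|m IH] k x //=; rewrite IH. Qed.

Lemma Echain_lin m k : islin (@Echain m k).
Proof.
elim: m k => [|m IH] k; first exact: lin_id.
by apply: lin_comp; [exact: IH | exact: Emap_lin].
Qed.

Lemma Fchain_lin m k : islin (@Fchain m k).
Proof.
elim: m k => [|m IH] k; first exact: lin_id.
by apply: lin_comp; [exact: Fmap_lin | exact: IH].
Qed.

Fixpoint sE (j : nat) (w : seq bool) : nat :=
  match w with
  | [::] => 0
  | b :: w' => if b then sE j.+1 w' else (j + sE j w')%N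
  end.

Lemma Echain_b m k j (w : m.-tuple bool) :
  Echain k (bvec j w) = q ^+ sE j w *: bvec (j + count id w) [tuple].
Proof.
elim: m k j w => [|m IH] k j w.
  by rewrite (tuple0 w) /= addn0 expr0 scale1r.
move: w; apply: cons_ind => b w /=.
rewrite Emap_b; case: b => /=.
  by rewrite IH addSnnS.
by rewrite (linZ (@Echain_lin _ _)) IH scalerA -exprD.
Qed.

Lemma sE_cat j a r : sE j (a ++ r) = (sE j a + sE (j + count id a) r)%N.
Proof.
elim: a j => [|b a IH] j /=; first by rewrite addn0.
case: b => /=; rewrite IH.
  by rewrite addnA addn1 addSn.
by rewrite addnA.
Qed.

Definition insw n (i : nat) (u : (n - 2).-tuple bool) (p : seq bool) : n.-tuple bool :=
  insubd (nseq_tuple n false) (take i.-1 u ++ p ++ drop i.-1 u).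

Lemma val_insw n i (u : (n - 2).-tuple bool) p :
  (2 <= n)%N -> size p = 2%N -> val (insw i u p) = take i.-1 u ++ p ++ drop i.-1 u.
Proof.
move=> hn hp; rewrite /insw val_insubd.
have -> : size (take i.-1 u ++ p ++ drop i.-1 u) == n; last by [].
by rewrite !size_cat addnCA -size_cat cat_take_drop size_tuple hp addnC subnK.
Qed.

Lemma eta_lin n i : islin (@eta_i K q n i). Proof. exact: linext_lin. Qed.
Lemma eps_lin n i : islin (@eps_i K q n i). Proof. exact: linext_lin. Qed.

Lemma eta_b n i j (u : (n - 2).-tuple bool) :
  eta_i q i (bvec j u) = bvec j (insw i u [:: false; true]) - q^-1 *: bvec j (insw i u [:: true; false]).
Proof. by rewrite /eta_i linext_bvec. Qed.

Lemma Echain_eta n i (y : vec (n - 2)) : (2 <= n)%N -> Echain 0 (eta_i q i y) = 0.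
Proof.
move=> hn.
apply: (@lin_ext K _ _ (fun y => Echain 0 (eta_i q i y)) (fun _ => 0)) => //.
- by apply: lin_comp; [exact: Echain_lin | exact: eta_lin].
- by move=> a x z; rewrite scaler0 addr0.
move=> j u; rewrite eta_b (linB (@Echain_lin _ _)) (linZ (@Echain_lin _ _)) !Echain_b.
rewrite !val_insw // !sE_cat !count_cat /= !addn0 !add0n.
rewrite scalerA [((_ + count id (take _ _)).+1 + _)%N]addSn [(sE j _ + _.+1)%N]addnS.
by rewrite exprS mulrA mulVf // mul1r subrr.
Qed.

Lemma cons_eq n b b' (w w' : n.-tuple bool) :
  ([tuple of b :: w] == [tuple of b' :: w']) = (b == b') && (w == w').
Proof. by rewrite -val_eqE /= eqseq_cons val_eqE. Qed.

Lemma sum_mono (V : lmodType K) (a : K) d (g : nat -> V) :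
  \sum_(i < size (a *: 'X^d : {poly K})) (a *: 'X^d : {poly K})`_i *: g i = a *: g d.
Proof.
rewrite (@sum_widen _ _ _ g d.+1); last first.
  by apply: leq_trans (size_scale_leq _ _) _; rewrite size_polyXn.
rewrite (bigD1 ord_max) //= big1 ?addr0; first by rewrite coefZ coefXn eqxx mulr1.
move=> i hi; rewrite coefZ coefXn.
case: eqP => [e|]; last by rewrite mulr0 scale0r.
by move: hi; rewrite -val_eqE /= e eqxx.
Qed.

Lemma Fmap_comp k n (y : vec n) b (w : n.-tuple bool) :
  (Fmap q Q k y) [tuple of b :: w] =
  \sum_(i < size (y w)) (y w)`_i *:
     (if b then (q ^ (i%:Z - k - 1) / Q * qint q i%:Z) *: 'X^(i.-1)
      else qmu q Q (k + 1 - i%:Z) *: 'X^i).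
Proof.
rewrite /Fmap /linext sum_ffunE (bigD1 w) //= [X in _ + X]big1 ?addr0.
  rewrite sum_ffunE; apply: eq_bigr => i _.
  rewrite !ffunE !cons_eq !eqxx !andbT; congr (_ *: _).
  case: b; case: i => [[|i] hi] /=; rewrite ?ffunE ?cons_eq ?eqxx ?scaler0 ?addr0 ?add0r //.
  by rewrite qint0' mulr0 scale0r.
move=> w' hw; have hw' : (w == w') = false by rewrite eq_sym; apply/negbTE.
rewrite sum_ffunE; apply: big1 => i _.
rewrite !ffunE !cons_eq hw' !andbF scaler0 add0r.
by case: i => [[|i] hi] /=; rewrite ?ffunE ?cons_eq ?hw' ?andbF ?scaler0.
Qed.

Fixpoint cF (k : int) (j : nat) (w : seq bool) : K :=
  match w with
  | [::] => 1
  | b :: w' => cF (k + 1) j w' *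
      (if b then q ^ ((j - count id w')%N%:Z - k - 1) / Q * qint q (j - count id w')%N%:Z
       else qmu q Q (k + 1 - (j - count id w')%N%:Z))
  end.

Lemma Fchain_comp m k j (w : m.-tuple bool) :
  (Fchain m k (bvec j [tuple])) w = cF k j w *: 'X^(j - count id w).
Proof.
elim: m k w => [|m IH] k w.
  by rewrite (tuple0 w) /= ffunE eqxx scale1r subn0.
move: w; apply: cons_ind => b w /=.
rewrite Fmap_comp IH (sum_mono _ _ (fun i : nat => if b
      then (q ^ (i%:Z - k - 1) / Q * qint q i%:Z) *: 'X^(i.-1)
      else qmu q Q (k + 1 - i%:Z) *: 'X^i)).
by case: b; rewrite scalerA /= ?add1n ?subnS ?add0n.
Qed.

Lemma cF_cat k j a r :
  cF k j (a ++ r) = cF (k + (size a)%:Z) j r * cF k (j - count id r) a.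
Proof.
elim: a k => [|b a IH] k /=; first by rewrite addr0 mulr1.
by rewrite IH count_cat -subnDA addnC -mulrA -addrA -PoszD add1n.
Qed.

Lemma cF_swap k j b :
  - q * cF k j [:: false, true & b] + cF k j [:: true, false & b] = 0.
Proof.
rewrite /= add1n add0n subnS.
move: (cF (k + 1 + 1) j b) => C.
case: (j - count id b)%N => [|d] /=; rewrite ?qint0' ?mulr0 ?mul0r ?oppr0 ?add0r //.
  by rewrite mulr0 addr0.
qn; fld.
Qed.


Lemma seq_a (s : seq bool) p : (p.+1 < size s)%N ->
  take p s ++ [:: nth false s p; nth false s p.+1] ++ drop p.+2 s = s.
Proof.
move=> h; rewrite -[RHS](cat_take_drop p s); congr (_ ++ _).
by rewrite [drop p s](drop_nth false) ?(ltnW h) // [drop p.+1 s](drop_nth false h).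
Qed.

Lemma seq_b (u : seq bool) p c d : (p <= size u)%N ->
  [/\ take p (take p u ++ [:: c; d] ++ drop p u) ++ drop p.+2 (take p u ++ [:: c; d] ++ drop p u) = u,
      nth false (take p u ++ [:: c; d] ++ drop p u) p = c &
      nth false (take p u ++ [:: c; d] ++ drop p u) p.+1 = d].
Proof.
move=> h; have hs : size (take p u) = p by rewrite size_takel.
split.
- rewrite take_size_cat // catA drop_size_cat ?cat_take_drop //.
  by rewrite size_cat hs addn2.
- by rewrite nth_cat hs ltnn subnn.
- by rewrite nth_cat hs ltnNge leqnSn /= subSnn.
Qed.

Definition rmw n i (w : n.-tuple bool) : (n - 2).-tuple bool :=
  insubd (nseq_tuple (n - 2) false) (take i.-1 w ++ drop i.+1 w).

Lemma val_rmw n p (w : n.-tuple bool) : (p.+2 <= n)%N ->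
  val (rmw p.+1 w) = take p w ++ drop p.+2 w.
Proof.
move=> h; rewrite /rmw val_insubd.
have -> : size (take p w ++ drop p.+2 w) == (n - 2)%N; last by [].
rewrite size_cat size_takel ?size_drop ?size_tuple; first by apply/eqP; lia.
by apply: ltnW; apply: ltnW.
Qed.

Lemma eps_point n p (u : (n - 2).-tuple bool) (w : n.-tuple bool) : (p.+2 <= n)%N ->
  (if u == rmw p.+1 w then epsc q (nth false w p) (nth false w p.+1) else 0) =
  (if w == insw p.+1 u [:: false; true] then - q else 0)
  + (if w == insw p.+1 u [:: true; false] then 1 else 0).
Proof.
move=> hn; have h2 : (2 <= n)%N by apply: leq_trans hn; rewrite ltnS.
have hpu : (p <= size u)%N by rewrite size_tuple; lia.
have hins c d : val (insw p.+1 u [:: c; d]) = take p u ++ [:: c; d] ++ drop p u.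
  by rewrite val_insw.
have hrm c d : rmw p.+1 (insw p.+1 u [:: c; d]) = u.
  by apply: val_inj; rewrite val_rmw // hins; case: (seq_b c d hpu).
have hnth c d : (nth false (insw p.+1 u [:: c; d]) p = c) /\ (nth false (insw p.+1 u [:: c; d]) p.+1 = d).
  by rewrite hins; case: (seq_b c d hpu).
have hAB : (insw p.+1 u [:: false; true] == insw p.+1 u [:: true; false]) = false.
  apply/negbTE/eqP => e; have := (hnth false true).1; rewrite e (hnth true false).1 //.
case: (w =P insw p.+1 u [:: false; true]) => [->|nA].
  by rewrite hAB hrm eqxx (hnth _ _).1 (hnth _ _).2 addr0.
case: (w =P insw p.+1 u [:: true; false]) => [->|nB].
  by rewrite hrm eqxx (hnth _ _).1 (hnth _ _).2 add0r.
rewrite addr0; case: eqP => // hu.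
have hw c d : nth false w p = c -> nth false w p.+1 = d -> w = insw p.+1 u [:: c; d].
  move=> hc hd; apply: val_inj; rewrite hins -hc -hd.
  have hsz : (p.+1 < size w)%N by rewrite size_tuple.
  have ht : size (take p w) = p by rewrite size_takel // ltnW // ltnW.
  have hu' : val u = take p w ++ drop p.+2 w by rewrite hu val_rmw.
  by rewrite hu' take_size_cat // drop_size_cat // seq_a.
move: (hw (nth false w p) (nth false w p.+1) erefl erefl).
case: (nth false w p); case: (nth false w p.+1) => //= e.
all: by [case: nB | case: nA].
Qed.

Lemma sum_if (p : {poly K}) (e : K) (c : bool) :
  \sum_(k < size p) p`_k *: (e *: (if c then 'X^k else 0)) = (if c then e else 0) *: p.
Proof.
case: c; last by rewrite scale0r; apply: big1 => k _; rewrite !scaler0.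
under eq_bigr do rewrite scalerA mulrC -scalerA.
by rewrite -scaler_sumr -poly_def coefK.
Qed.

Lemma eps_comp0 n p (x : vec n) (u : (n - 2).-tuple bool) :
  (eps_i q p.+1 x) u = \sum_w
     (if u == rmw p.+1 w then epsc q (nth false w p) (nth false w p.+1) else 0) *: x w.
Proof.
rewrite /eps_i /linext sum_ffunE; apply: eq_bigr => w _.
rewrite sum_ffunE; under eq_bigr do rewrite !ffunE.
exact: sum_if.
Qed.

Lemma sum_pick n (x : vec n) (a : n.-tuple bool) (c : K) :
  \sum_w (if w == a then c else 0) *: x w = c *: x a.
Proof.
rewrite (bigD1 a) //= eqxx big1 ?addr0 // => w hw.
by rewrite (negbTE hw) scale0r.
Qed.

Lemma eps_comp n p (x : vec n) (u : (n - 2).-tuple bool) : (p.+2 <= n)%N ->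
  (eps_i q p.+1 x) u = - q *: x (insw p.+1 u [:: false; true]) + x (insw p.+1 u [:: true; false]).
Proof.
move=> hn; rewrite eps_comp0.
under eq_bigr do rewrite eps_point // scalerDl.
by rewrite big_split /= !sum_pick scale1r.
Qed.

Lemma eps_Fchain n p (z : vec 0) : (p.+2 <= n)%N -> eps_i q p.+1 (Fchain n 0 z) = 0.
Proof.
move=> hn.
apply: (@lin_ext K _ _ (fun z => eps_i q p.+1 (Fchain n 0 z)) (fun _ => 0)) => //.
- by apply: lin_comp; [exact: eps_lin | exact: Fchain_lin].
- by move=> a x y; rewrite scaler0 addr0.
move=> j w; rewrite (tuple0 w); apply/ffunP => u.
have h2 : (2 <= n)%N by apply: leq_trans hn; rewrite ltnS.
rewrite eps_comp // !Fchain_comp !val_insw // ffunE -[p.+1.-1]/p.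
rewrite -[[:: false; true] ++ drop p u]/[:: false, true & drop p u].
rewrite -[[:: true; false] ++ drop p u]/[:: true, false & drop p u].
have ec : count id (take p u ++ [:: true, false & drop p u]) =
          count id (take p u ++ [:: false, true & drop p u]) by rewrite !count_cat.
rewrite ec (cF_cat _ _ (take p u) [:: false, true & drop p u]).
rewrite (cF_cat _ _ (take p u) [:: true, false & drop p u]).
have ec2 : count id [:: true, false & drop p u] = count id [:: false, true & drop p u] by [].
by rewrite ec2 scalerA -scalerDl mulrA -mulrDl cF_swap mul0r scale0r.
Qed.

Hypothesis hmu : forall j : nat, qmu q Q (j.+1)%:Z != 0.

Lemma cst_neq0 n : \prod_(1 <= j < n.+1) qmu q Q j%:Z != 0.
Proof.
rewrite big_nat_cond; elim/big_rec: _ => [|j x /andP [/andP [hj _] _] hx]; first exact: oner_neq0.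
rewrite mulf_neq0 //; case: j hj => [|j] hj; first by [].
exact: hmu.
Qed.

Lemma main_gen n (hn : (1 <= n)%N) :
  let P := Pmu q Q (n := n) in
  [/\ is_module_endo q Q 0 P,
      forall x : vec n, P (P x) = P x &
      (2 <= n)%N ->
      forall i : nat, (1 <= i <= n - 1)%N ->
        (forall x : vec n, eps_i q i (P x) = 0) /\
        (forall y : vec (n - 2), P (eta_i q i y) = 0)].
Proof.
move=> P; set c := \prod_(1 <= j < n.+1) qmu q Q j%:Z.
have hc : c != 0 by apply: cst_neq0.
have hP x : P x = c^-1 *: Gchain q Q 0 x by [].
split.
- split=> x; rewrite !hP.
  + by rewrite Gchain_actK actKZ.
  + by rewrite Gchain_actKi actKiZ.
  + by rewrite Gchain_actE actEZ.
  + by rewrite Gchain_actF actFZ.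
- move=> x; rewrite !hP (linZ (@Gchain_lin _ _)) Gchain_sq scalerA scalerA.
  have -> : cst n 0 = c by rewrite /cst; apply: eq_bigr => j _; rewrite add0r.
  by rewrite -mulrA mulVf // mulr1.
move=> h2 [|p] //= hi; have hp : (p.+2 <= n)%N by move: hi; rewrite /=; lia.
split.
- move=> x; rewrite hP (linZ (@eps_lin _ _)) Gchain_EF eps_Fchain // scaler0.
  done.
- move=> y; rewrite hP Gchain_EF Echain_eta // (lin0 (@Fchain_lin _ _)) scaler0.
  done.
Qed.

End Gen.


Lemma sub_inv_neq0 (F : fieldType) (a : F) : a != 0 -> a * a - 1 != 0 -> a - a^-1 != 0.
Proof.
move=> ha h; apply: contraNneq h => e.
have -> : a * a - 1 = a * (a - a^-1) by rewrite mulrBr mulfV.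
by rewrite e mulr0.
Qed.

Lemma tofrac_neq0' (p : {mpoly Cfield[2]}) (v : 'I_2 -> Cfield) :
  p.@[v] != 0 -> (tofrac p : Kfield) != 0.
Proof. by move=> h; rewrite tofrac_eq0; apply: contra h => /eqP ->; rewrite meval0. Qed.

Lemma qK_neq0 : qK != 0.
Proof. by apply: (@tofrac_neq0' _ (fun _ => 1)); rewrite mevalXU oner_neq0. Qed.

Lemma qmuK_neq0 : qmuK != 0.
Proof. by apply: (@tofrac_neq0' _ (fun _ => 1)); rewrite mevalXU oner_neq0. Qed.

Lemma qK_sq : qK * qK - 1 != 0.
Proof.
have -> : qK * qK - 1 = tofrac ('X_(0 : 'I_2) * 'X_(0 : 'I_2) - 1 : {mpoly Cfield[2]}).
  by rewrite rmorphB rmorphM rmorph1.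
apply: (@tofrac_neq0' _ (fun _ => 0)).
rewrite mevalB mevalM meval1 mevalXU.
have -> : (0 * 0 - 1 : Cfield) = -1 by ring.
by rewrite oppr_eq0 oner_neq0.
Qed.

Lemma qmuK_j (j : nat) : qmu qK qmuK (j.+1)%:Z != 0.
Proof.
rewrite /qmu; apply: mulf_neq0; last first.
  rewrite invr_eq0; apply: sub_inv_neq0; [exact: qK_neq0 | exact: qK_sq].
apply: sub_inv_neq0.
  by rewrite mulf_neq0 ?qmuK_neq0 // expfz_neq0 // qK_neq0.
have -> : qmuK * qK ^ (j.+1)%:Z * (qmuK * qK ^ (j.+1)%:Z) - 1 =
  tofrac ('X_(1 : 'I_2) * 'X_(0 : 'I_2) ^+ j.+1 * ('X_(1 : 'I_2) * 'X_(0 : 'I_2) ^+ j.+1) - 1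
          : {mpoly Cfield[2]}).
  by rewrite rmorphB !rmorphM rmorph1 rmorphXn.
apply: (@tofrac_neq0' _ (fun _ => 0)).
rewrite mevalB !mevalM meval1 !mevalXU.
set t := (X in 0 * X).
have -> : 0 * t * (0 * t) - 1 = -1 by ring.
by rewrite oppr_eq0 oner_neq0.
Qed.

Theorem mainTheorem5 (n : nat) (hn : (1 <= n)%N) :
  let P := Pmu qK qmuK (n := n) in
  [/\ is_module_endo qK qmuK 0 P,
      forall x : vec Kfield n, P (P x) = P x &
      (2 <= n)%N ->
      forall i : nat, (1 <= i <= n - 1)%N ->
        (forall x : vec Kfield n, eps_i qK i (P x) = 0) /\
        (forall y : vec Kfield (n - 2), P (eta_i qK i y) = 0)].
Proof.
exact: (main_gen qK_neq0 qmuK_neq0 qK_sq qmuK_j hn).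
Qed.
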